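(* Let $\ell_1,\dots,\ell_T$ be labels, $v_1,v_2>0$, and indices $i\le k<j$ such that the optimal solutions of the adjacent subproblems $(i,k)$ and $(k+1,j)$ both exist and are constant (hence with values $r_{i,k}$ and $r_{k+1,j}$ respectively). If $r_{i,k}\ge r_{k+1,j}$, then the optimal solution of the pooled subproblem $(i,j)$ exists, is constant, and has value $r_{i,j}$.
   Context: A regular binary proper scoring rule (RBPSR) is a function $C_\rho:\{\theta_1,\theta_2\}\times[0,1]\to[0,\infty]$ given by $C_\rho(\theta_1,q)=\int_q^1\frac{\rho(\eta)}{\eta}\,d\eta$ and $C_\rho(\theta_2,q)=\int_0^q\frac{\rho(\eta)}{1-\eta}\,d\eta$, where $\rho$ is a probability distribution on $[0,1]$ (possibly containing Dirac point masses), and these integrals are finite except that $C_\rho(\theta_1,0)$ and $C_\rho(\theta_2,1)$ may equal $\infty$. Given labels $\ell_1,\dots,\ell_T\in\{\theta_1,\theta_2\}$ and weights $v_1,v_2>0$, write $w(\theta_1)=v_1$, $w(\theta_2)=v_2$. For $1\le i\le j\le T$, a solution of subproblem $(i,j)$ is any $p_{i,j}=(p_i,\dots,p_j)\in[0,1]^{j-i+1}$, feasible if $p_i\le\cdots\le p_j$, with objective $J_{i,j}(p_{i,j})=\sum_{t=i}^j w(\ell_t)C_\rho(\ell_t,p_t)$. The optimal solution of subproblem $(i,j)$ is a feasible solution minimizing $J_{i,j}$ among feasible solutions simultaneously for every RBPSR $C_\rho$; it is constant if $p_i=\cdots=p_j$. For $i\le j$, $r_{i,j}=\frac{v_1m_{i,j}}{v_1m_{i,j}+v_2n_{i,j}}$,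 where $m_{i,j},n_{i,j}$ are the numbers of $\theta_1$- and $\theta_2$-labels among $\ell_i,\dots,\ell_j$. *)

(* Defs.v *)
From Stdlib Require Import Reals Lra Classical ClassicalEpsilon.
Open Scope R_scope.

Inductive ereal : Type := Fin (r : R) | PInf.

Definition ele (x y : ereal) : Prop :=
  match x, y with
  | _, PInf => True
  | PInf, Fin _ => False
  | Fin a, Fin b => a <= b
  end.

Definition eadd (x y : ereal) : ereal :=
  match x, y with
  | Fin a, Fin b => Fin (a + b)
  | _, _ => PInf
  end.

(** scaling by a real weight (used only with weights > 0) *)
Definition escale (v : R) (x : ereal) : ereal :=
  match x with Fin a => Fin (v * a) | PInf => PInf end.

Definition esup (S : R -> Prop) : ereal :=
  match excluded_middle_informative (exists m, is_lub S m) with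
  | left H => Fin (proj1_sig (constructive_indefinite_description _ H))
  | right _ => PInf
  end.

(** A probability distribution rho on [0,1], possibly with Dirac masses,
    represented by its cumulative distribution function
    F x = rho([0,x]) (rho((-oo,x])). *)
Definition is_cdf01 (F : R -> R) : Prop :=
  (forall x y, x <= y -> F x <= F y) /\
  (forall x, x < 0 -> F x = 0) /\
  (forall x, 1 <= x -> F x = 1) /\
  (forall x eps, 0 < eps -> exists d, 0 < d /\ forall y, x <= y < x + d -> F y - F x < eps).

(** Lower sum of a nonnegative step function below g on the partition
    x 0 <= x 1 <= ... <= x n, with value c k on the piece (x (k-1), x k]:
    sum_{k=1}^n c k * rho((x (k-1), x k]). *)
Fixpoint lsum (F : R -> R) (x c : nat -> R) (n : nat) : R :=
  match n with
  | O => 0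
  | S m => lsum F x c m + c (S m) * (F (x (S m)) - F (x m))
  end.

Definition is_lower_sum (F : R -> R) (g : R -> ereal) (a b s : R) : Prop :=
  exists (n : nat) (x c : nat -> R),
    x O = a /\ x n = b /\
    (forall k, (k < n)%nat -> x k <= x (S k)) /\
    (forall k, (1 <= k <= n)%nat ->
       0 <= c k /\ forall eta, x (pred k) < eta <= x k -> ele (Fin (c k)) (g eta)) /\
    s = lsum F x c n.

(** Lebesgue--Stieltjes integral of the nonnegative (extended-valued) g over
    the interval (a,b] with respect to the distribution with CDF F, defined as
    the supremum of the integrals of nonnegative step functions below g. *)
Definition LSint (F : R -> R) (g : R -> ereal) (a b : R) : ereal :=
  esup (is_lower_sum F g a b).

(** integrands 1/eta and 1/(1-eta), with value +oo at the singular point *)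
Definition g1 (eta : R) : ereal := if Rlt_dec 0 eta then Fin (/ eta) else PInf.
Definition g2 (eta : R) : ereal := if Rlt_dec eta 1 then Fin (/ (1 - eta)) else PInf.

Inductive label : Type := theta1 | theta2.

(** The RBPSR C_rho, rho given by its CDF F:
    C(theta1,q) = int_{(q,1]} rho(eta)/eta,
    C(theta2,q) = int_{[0,q]} rho(eta)/(1-eta)   ([0,q] = (-1,q] for rho on [0,1]). *)
Definition Crho (F : R -> R) (l : label) (q : R) : ereal :=
  match l with
  | theta1 => LSint F g1 q 1
  | theta2 => LSint F g2 (-1) q
  end.

Definition weight (v1 v2 : R) (l : label) : R :=
  match l with theta1 => v1 | theta2 => v2 end.

(** J_{i,j}(p) = sum_{t=i}^{j} w(l_t) C(l_t, p_t), computed as a sum of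
    cnt terms starting at index i. *)
Fixpoint Jsum (F : R -> R) (v1 v2 : R) (ell : nat -> label) (p : nat -> R)
  (i cnt : nat) : ereal :=
  match cnt with
  | O => Fin 0
  | S c => eadd (escale (weight v1 v2 (ell i)) (Crho F (ell i) (p i)))
                (Jsum F v1 v2 ell p (S i) c)
  end.

Definition J (F : R -> R) (v1 v2 : R) (ell : nat -> label) (i j : nat)
  (p : nat -> R) : ereal :=
  Jsum F v1 v2 ell p i (S j - i).

(** a solution p_{i,j} is the restriction of p : nat -> R to indices i..j *)
Definition feasible (i j : nat) (p : nat -> R) : Prop :=
  (forall t, (i <= t <= j)%nat -> 0 <= p t <= 1) /\
  (forall t, (i <= t)%nat -> (t < j)%nat -> p t <= p (S t)).

Definition optimal (ell : nat -> label) (v1 v2 : R) (i j : nat) (p : nat -> R) : Prop :=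
  feasible i j p /\
  forall F, is_cdf01 F ->
    forall p', feasible i j p' -> ele (J F v1 v2 ell i j p) (J F v1 v2 ell i j p').

Definition constant_sol (i j : nat) (p : nat -> R) : Prop :=
  forall t, (i <= t <= j)%nat -> p t = p i.

Definition is_lab (l l' : label) : nat :=
  match l, l' with
  | theta1, theta1 => 1%nat
  | theta2, theta2 => 1%nat
  | _, _ => 0%nat
  end.

Fixpoint count_lab (l : label) (ell : nat -> label) (i cnt : nat) : nat :=
  match cnt with
  | O => O
  | S c => (is_lab l (ell i) + count_lab l ell (S i) c)%nat
  end.

Definition mcount (ell : nat -> label) (i j : nat) : nat := count_lab theta1 ell i (S j - i).
Definition ncount (ell : nat -> label) (i j : nat) : nat := count_lab theta2 ell i (S j - i).

Definition rval (ell : nat -> label) (v1 v2 : R) (i j : nat) : R :=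
  v1 * INR (mcount ell i j) / (v1 * INR (mcount ell i j) + v2 * INR (ncount ell i j)).

(* Main.v *)
Require Import Defs.
From Stdlib Require Import Reals.
From Stdlib Require Import Reals Lra Lia Classical ClassicalEpsilon FunctionalExtensionality PropExtensionality.
Open Scope R_scope.


Lemma ele_refl x : ele x x.
Proof. destruct x; simpl; lra || auto. Qed.

Lemma ele_trans x y z : ele x y -> ele y z -> ele x z.
Proof. destruct x, y, z; simpl; intros; auto; try lra; contradiction. Qed.

Lemma ele_antisym x y : ele x y -> ele y x -> x = y.
Proof. destruct x, y; simpl; intros; auto; try contradiction. f_equal; lra. Qed.

Lemma eadd_comm x y : eadd x y = eadd y x.
Proof. destruct x, y; simpl; auto. f_equal; lra. Qed.

Lemma eadd_assoc x y z : eadd x (eadd y z) = eadd (eadd x y) z.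
Proof. destruct x, y, z; simpl; auto. f_equal; lra. Qed.

Lemma eadd_0_l x : eadd (Fin 0) x = x.
Proof. destruct x; simpl; auto. f_equal; lra. Qed.

Lemma eadd_0_r x : eadd x (Fin 0) = x.
Proof. rewrite eadd_comm; apply eadd_0_l. Qed.

Lemma eadd_mono x x' y y' : ele x x' -> ele y y' -> ele (eadd x y) (eadd x' y').
Proof. destruct x, x', y, y'; simpl; intros; auto; try lra; contradiction. Qed.

Lemma escale_eadd v x y : escale v (eadd x y) = eadd (escale v x) (escale v y).
Proof. destruct x, y; simpl; auto. f_equal; lra. Qed.

Lemma escale_escale a b x : escale a (escale b x) = escale (a*b) x.
Proof. destruct x; simpl; auto. f_equal; lra. Qed.

Lemma escale_0 v : escale v (Fin 0) = Fin 0.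
Proof. simpl; f_equal; lra. Qed.

Lemma escale_ub v x b : 0 <= v -> ele x (Fin b) -> ele (escale v x) (Fin (v*b)).
Proof. destruct x; simpl; intros; auto. nra. Qed.

Lemma escale_lb v x b : 0 <= v -> ele (Fin b) x -> ele (Fin (v*b)) (escale v x).
Proof. destruct x; simpl; intros; auto. nra. Qed.

Lemma escale_nonneg v x : 0 <= v -> ele (Fin 0) x -> ele (Fin 0) (escale v x).
Proof. intros. replace 0 with (v*0) by ring. apply escale_lb; auto. Qed.

Fixpoint emult (n : nat) (x : ereal) : ereal :=
  match n with O => Fin 0 | S m => eadd x (emult m x) end.

Lemma emult_S n x : emult (S n) x = escale (INR (S n)) x.
Proof.
  induction n.
  - destruct x; simpl; auto. f_equal; lra.
  - change (emult (S (S n)) x) with (eadd x (emult (S n) x)). rewrite IHn.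
    destruct x as [a|]; [|reflexivity]. unfold escale, eadd. f_equal. rewrite (S_INR (S n)). ring.
Qed.

Lemma emult_nonneg n x : ele (Fin 0) x -> ele (Fin 0) (emult n x).
Proof.
  intros H; induction n. simpl; lra.
  change (emult (S n) x) with (eadd x (emult n x)).
  replace (Fin 0) with (eadd (Fin 0) (Fin 0)) by (simpl; f_equal; lra).
  apply eadd_mono; auto.
Qed.

Lemma emult_zero n : emult n (Fin 0) = Fin 0.
Proof. induction n; simpl; auto. rewrite IHn. simpl; f_equal; lra. Qed.

Lemma esup_ge (S : R -> Prop) s : S s -> ele (Fin s) (esup S).
Proof.
  intros Hs. unfold esup. destruct (excluded_middle_informative _) as [H|H]; simpl; auto.
  destruct (constructive_indefinite_description _ H) as [m Hm]; simpl. destruct Hm as [Hm _]. apply Hm; auto.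
Qed.

Lemma esup_le (S : R -> Prop) s0 B : S s0 -> (forall s, S s -> s <= B) -> ele (esup S) (Fin B).
Proof.
  intros H0 HB. unfold esup. destruct (excluded_middle_informative _) as [H|H]; simpl.
  - destruct (constructive_indefinite_description _ H) as [m Hm]; simpl. destruct Hm as [_ Hm]. apply Hm. exact HB.
  - apply H. destruct (completeness S) as [m Hm].
    + exists B. exact HB.
    + exists s0; auto.
    + exists m; auto.
Qed.

Lemma esup_ext (S S' : R -> Prop) : (forall s, S s <-> S' s) -> esup S = esup S'.
Proof.
  intros H. assert (S = S') as ->; auto.
  apply functional_extensionality; intros s; apply propositional_extensionality; auto.
Qed.

Inductive lsI (F : R -> R) (g : R -> ereal) (a : R) : R -> R -> Prop :=
| lsI0 : lsI F g a a 0
| lsI1 b b' s c0 : lsI F g a b s -> b <= b' -> 0 <= c0 ->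
    (forall x, b < x <= b' -> ele (Fin c0) (g x)) ->
    lsI F g a b' (s + c0 * (F b' - F b)).

Lemma lsum_ext F x c x' c' n :
  (forall k, (k <= n)%nat -> x k = x' k /\ c k = c' k) -> lsum F x c n = lsum F x' c' n.
Proof.
  induction n; intros H; simpl; auto.
  rewrite IHn by (intros; apply H; lia).
  destruct (H (S n)) as [-> ->]; auto. destruct (H n) as [-> _]; auto.
Qed.

Lemma lower_to_lsI F g a b s : is_lower_sum F g a b s -> lsI F g a b s.
Proof.
  intros [n [x [c [H0 [Hn [Hm [Hp Hs]]]]]]].
  revert b s Hn Hs.
  induction n; intros b s Hn Hs.
  - simpl in Hs. subst s. rewrite <- Hn, H0. apply lsI0.
  - simpl in Hs. subst s. rewrite <- Hn.
    destruct (Hp (S n)) as [Hc Hg]; [lia|]. simpl in Hg.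
    apply lsI1; [ | apply Hm; lia | auto | auto].
    apply IHn; [intros k Hk; apply Hm; lia | intros k Hk; apply Hp; lia | reflexivity | reflexivity].
Qed.

Lemma lsI_to_lower F g a b s : lsI F g a b s -> is_lower_sum F g a b s.
Proof.
  induction 1 as [|b b' s c0 H IH Hbb Hc0 Hg].
  - exists O, (fun _ => a), (fun _ => 0). split; [auto|]. split; [auto|].
    split; [intros; lia|]. split; [intros; lia|]. simpl; auto.
  - destruct IH as [n [x [c [H0 [Hn [Hm [Hp Hs]]]]]]].
    exists (S n), (fun k => if Nat.eqb k (S n) then b' else x k),
      (fun k => if Nat.eqb k (S n) then c0 else c k).
    split; [simpl; auto|]. split; [rewrite Nat.eqb_refl; auto|].
    split.
    { intros k Hk. destruct (Nat.eqb_spec k (S n)); [lia|].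
      destruct (Nat.eqb_spec (S k) (S n)).
      * assert (k = n) by lia. subst k. rewrite Hn. auto.
      * apply Hm; lia. }
    split.
    { intros k Hk. destruct (Nat.eqb_spec k (S n)).
      - subst k. simpl Init.Nat.pred. destruct (Nat.eqb_spec n (S n)); [lia|].
        rewrite Hn. split; auto.
      - destruct (Nat.eqb_spec (Init.Nat.pred k) (S n)); [lia|]. apply Hp; lia. }
    simpl lsum. rewrite Nat.eqb_refl. destruct (Nat.eqb_spec n (S n)); [lia|].
    rewrite <- Hn, Hs. f_equal.
    apply lsum_ext. intros k Hk. destruct (Nat.eqb_spec k (S n)); [lia|]. auto.
Qed.

Lemma LS_eq F g a b : LSint F g a b = esup (lsI F g a b).
Proof. unfold LSint. apply esup_ext. split; [apply lower_to_lsI|apply lsI_to_lower]. Qed.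

Definition gnn (g : R -> ereal) := forall x, ele (Fin 0) (g x).

Lemma lsI_le F g a b s : lsI F g a b s -> a <= b.
Proof. induction 1; lra. Qed.

Lemma lsI_zero F g a b : gnn g -> a <= b -> lsI F g a b 0.
Proof.
  intros Hg Hab. replace 0 with (0 + 0 * (F b - F a)) by ring.
  apply lsI1; [apply lsI0 | lra | lra | intros; apply Hg].
Qed.

Lemma lsI_concat F g a b c s1 s2 : lsI F g a b s1 -> lsI F g b c s2 -> lsI F g a c (s1 + s2).
Proof.
  intros H1 H2. induction H2.
  - rewrite Rplus_0_r; auto.
  - rewrite <- Rplus_assoc. apply lsI1; auto.
Qed.

Lemma lsI_split F g a c s b : lsI F g a c s -> a <= b -> b <= c ->
  exists s1 s2, lsI F g a b s1 /\ lsI F g b c s2 /\ s = s1 + s2.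
Proof.
  induction 1 as [|b0 b' s c0 H IH Hbb Hc0 Hg]; intros Hab Hbc.
  - assert (b = a) by lra. subst b. exists 0, 0. split; [apply lsI0|]. split; [apply lsI0|]. ring.
  - destruct (Rle_lt_dec b b0).
    + destruct (IH Hab r) as [s1 [s2 [H1 [H2 E]]]].
      exists s1, (s2 + c0 * (F b' - F b0)). split; auto. split.
      * apply lsI1; auto.
      * rewrite E; ring.
    + exists (s + c0 * (F b - F b0)), (0 + c0 * (F b' - F b)). split.
      * apply lsI1; auto; try lra. intros x Hx; apply Hg; lra.
      * split. apply lsI1; auto. apply lsI0. intros x Hx; apply Hg; lra. ring.
Qed.

Lemma lsI_empty F g a b s : lsI F g a b s -> b = a -> s = 0.
Proof.
  induction 1 as [|b0 b' s c0 H IH Hbb Hc0 Hg]; intros E; auto.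
  pose proof (lsI_le _ _ _ _ _ H). subst b'. assert (b0 = a) by lra. subst b0.
  rewrite IH by auto. ring.
Qed.

Lemma lsI_scale F g h a b s al be : 0 < al -> 0 < be ->
  lsI F g a b s ->
  (forall x, a < x <= b -> ele (escale al (g x)) (escale be (h x))) ->
  lsI F h a b (al / be * s).
Proof.
  intros Hal Hbe. induction 1 as [|b0 b' s c0 H IH Hbb Hc0 Hg]; intros Hc.
  - rewrite Rmult_0_r. apply lsI0.
  - pose proof (lsI_le _ _ _ _ _ H).
    replace (al / be * (s + c0 * (F b' - F b0))) with
      (al / be * s + (al / be * c0) * (F b' - F b0)) by ring.
    apply lsI1; auto.
    + apply IH. intros x Hx; apply Hc; lra.
    + unfold Rdiv. apply Rmult_le_pos; auto. apply Rmult_le_pos; [lra|].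
      left; apply Rinv_0_lt_compat; auto.
    + intros x Hx. specialize (Hg x Hx). specialize (Hc x ltac:(lra)).
      destruct (g x) as [gx|], (h x) as [hx|]; simpl in *; auto; try contradiction.
      unfold Rdiv. apply Rmult_le_reg_l with be; auto.
      replace (be * (al * / be * c0)) with (al * c0) by (field; lra). nra.
Qed.

Lemma LS_ge F g a b s : lsI F g a b s -> ele (Fin s) (LSint F g a b).
Proof. rewrite LS_eq. apply esup_ge. Qed.

Lemma LS_le F g a b B : gnn g -> a <= b -> (forall s, lsI F g a b s -> s <= B) ->
  ele (LSint F g a b) (Fin B).
Proof. intros Hg Hab H. rewrite LS_eq. apply esup_le with 0; auto. apply lsI_zero; auto. Qed.

Lemma LS_nonneg F g a b : gnn g -> a <= b -> ele (Fin 0) (LSint F g a b).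
Proof. intros. apply LS_ge. apply lsI_zero; auto. Qed.

Lemma LS_empty F g a : gnn g -> LSint F g a a = Fin 0.
Proof.
  intros Hg. apply ele_antisym.
  - apply LS_le; auto. lra. intros s Hs. rewrite (lsI_empty _ _ _ _ _ Hs); auto; lra.
  - apply LS_nonneg; auto; lra.
Qed.

Lemma LS_add F g a b c : gnn g -> a <= b -> b <= c ->
  LSint F g a c = eadd (LSint F g a b) (LSint F g b c).
Proof.
  intros Hg Hab Hbc. apply ele_antisym.
  - destruct (LSint F g a b) as [L1|] eqn:E1; [|destruct (LSint F g a c); simpl; auto].
    destruct (LSint F g b c) as [L2|] eqn:E2; [|destruct (LSint F g a c); simpl; auto].
    change (eadd (Fin L1) (Fin L2)) with (Fin (L1 + L2)).
    apply LS_le; auto; [lra|]. intros s Hs.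
    destruct (lsI_split _ _ _ _ _ _ Hs Hab Hbc) as [s1 [s2 [H1 [H2 ->]]]].
    pose proof (LS_ge _ _ _ _ _ H1) as G1. pose proof (LS_ge _ _ _ _ _ H2) as G2.
    rewrite E1 in G1; rewrite E2 in G2. simpl in *. lra.
  - destruct (LSint F g a c) as [L|] eqn:E; [|destruct (eadd _ _); simpl; auto].
    assert (HU : forall s1 s2, lsI F g a b s1 -> lsI F g b c s2 -> s1 + s2 <= L).
    { intros s1 s2 H1 H2. pose proof (LS_ge _ _ _ _ _ (lsI_concat _ _ _ _ _ _ _ H1 H2)) as G.
      rewrite E in G. exact G. }
    pose proof (lsI_zero F g b c Hg Hbc) as Z2.
    assert (A1 : ele (LSint F g a b) (Fin (L - 0))).
    { apply LS_le; auto. intros s1 H1. specialize (HU _ _ H1 Z2). lra. }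
    destruct (LSint F g a b) as [L1|] eqn:E1; [|contradiction].
    assert (A1' : forall s2, lsI F g b c s2 -> L1 <= L - s2).
    { intros s2 H2. assert (ele (LSint F g a b) (Fin (L - s2))).
      { apply LS_le; auto. intros s1 H1. specialize (HU _ _ H1 H2). lra. }
      rewrite E1 in H. exact H. }
    assert (A2 : ele (LSint F g b c) (Fin (L - L1))).
    { apply LS_le; auto. intros s2 H2. specialize (A1' _ H2). lra. }
    destruct (LSint F g b c) as [L2|]; [|contradiction].
    simpl in *. lra.
Qed.

Lemma LS_compare F g h a b al be : gnn g -> 0 < al -> 0 < be -> a <= b ->
  (forall x, a < x <= b -> ele (escale al (g x)) (escale be (h x))) ->
  ele (escale al (LSint F g a b)) (escale be (LSint F h a b)).
Proof.
  intros Hg Hal Hbe Hab Hc.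
  destruct (LSint F h a b) as [H|] eqn:EH; [|destruct (LSint F g a b); simpl; auto].
  assert (ele (LSint F g a b) (Fin (be / al * H))).
  { apply LS_le; auto. intros s Hs.
    pose proof (LS_ge _ _ _ _ _ (lsI_scale F g h a b s al be Hal Hbe Hs Hc)) as G.
    rewrite EH in G. simpl in G.
    apply Rmult_le_reg_l with (al / be).
    - unfold Rdiv; apply Rmult_lt_0_compat; auto; apply Rinv_0_lt_compat; auto.
    - replace (al / be * (be / al * H)) with H by (field; lra). exact G. }
  destruct (LSint F g a b) as [G|]; [|contradiction]. simpl in *.
  apply Rmult_le_reg_l with (/ al). apply Rinv_0_lt_compat; auto.
  replace (/ al * (al * G)) with G by (field; lra).
  replace (/ al * (be * H)) with (be / al * H) by (field; lra). exact H0.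
Qed.

Fixpoint esum (f : nat -> ereal) (i c : nat) : ereal :=
  match c with O => Fin 0 | S c' => eadd (f i) (esum f (S i) c') end.

Lemma Jsum_split F v1 v2 ell q i a b :
  Jsum F v1 v2 ell q i (a + b) = eadd (Jsum F v1 v2 ell q i a) (Jsum F v1 v2 ell q (i + a) b).
Proof.
  revert i; induction a; intros i.
  - cbn [Jsum Nat.add]. rewrite eadd_0_l, Nat.add_0_r. auto.
  - cbn [Jsum Nat.add]. rewrite IHa. rewrite eadd_assoc. do 2 f_equal. lia.
Qed.

Lemma Jsum_last F v1 v2 ell q i c :
  Jsum F v1 v2 ell q i (S c) = eadd (Jsum F v1 v2 ell q i c)
    (escale (weight v1 v2 (ell (i + c)%nat)) (Crho F (ell (i + c)%nat) (q (i + c)%nat))).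
Proof.
  replace (S c) with (c + 1)%nat by lia. rewrite Jsum_split. cbn [Jsum]. rewrite eadd_0_r. auto.
Qed.

Lemma Jsum_decomp F v1 v2 ell q base ex i c :
  (forall t, (i <= t < i + c)%nat ->
     escale (weight v1 v2 (ell t)) (Crho F (ell t) (q t)) = eadd (base t) (ex t)) ->
  Jsum F v1 v2 ell q i c = eadd (esum base i c) (esum ex i c).
Proof.
  revert i; induction c; intros i H; cbn [Jsum esum].
  - rewrite eadd_0_l; auto.
  - rewrite IHc by (intros; apply H; lia). rewrite H by lia.
    rewrite !eadd_assoc. f_equal. rewrite <- !eadd_assoc. f_equal. apply eadd_comm.
Qed.

Lemma esum_ind1 ell X i c :
  esum (fun t => match ell t with theta1 => X | theta2 => Fin 0 end) i c
  = emult (count_lab theta1 ell i c) X.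
Proof.
  revert i; induction c; intros i; cbn [esum count_lab]; auto.
  rewrite IHc. destruct (ell i); cbn [is_lab Nat.add emult]; auto. apply eadd_0_l.
Qed.

Lemma esum_ind2 ell X i c :
  esum (fun t => match ell t with theta1 => Fin 0 | theta2 => X end) i c
  = emult (count_lab theta2 ell i c) X.
Proof.
  revert i; induction c; intros i; cbn [esum count_lab]; auto.
  rewrite IHc. destruct (ell i); cbn [is_lab Nat.add emult]; auto. apply eadd_0_l.
Qed.

Lemma gnn_g1 : gnn g1.
Proof. intros x. unfold g1. destruct (Rlt_dec 0 x); simpl; auto. left; apply Rinv_0_lt_compat; auto. Qed.

Lemma gnn_g2 : gnn g2.
Proof. intros x. unfold g2. destruct (Rlt_dec x 1); simpl; auto. left; apply Rinv_0_lt_compat; lra. Qed.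

Lemma div_le_helper al be a b : 0 < a -> 0 < b -> al * b <= be * a -> al * / a <= be * / b.
Proof.
  intros Ha Hb H.
  replace (al * / a) with ((al * b) * / (a * b)) by (field; lra).
  replace (be * / b) with ((be * a) * / (a * b)) by (field; lra).
  apply Rmult_le_compat_r; auto. left; apply Rinv_0_lt_compat; nra.
Qed.

Lemma pos_INR_S n : 0 < INR (S n).
Proof. apply lt_0_INR; lia. Qed.

Lemma up_mono F v1 v2 ell r s c x y : 0 < v1 -> 0 < v2 -> 0 <= r -> r <= x -> x <= y -> y <= 1 ->
  v1 * INR (count_lab theta1 ell s c) * (1 - r) <= v2 * INR (count_lab theta2 ell s c) * r ->
  ele (Jsum F v1 v2 ell (fun _ => x) s c) (Jsum F v1 v2 ell (fun _ => y) s c).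
Proof.
  intros Hv1 Hv2 Hr Hrx Hxy Hy1 Hcond.
  set (D1 := LSint F g1 x y). set (D2 := LSint F g2 x y).
  set (base := fun t => match ell t with theta1 => escale v1 (LSint F g1 y 1)
                                  | theta2 => escale v2 (LSint F g2 (-1) x) end).
  rewrite (Jsum_decomp F v1 v2 ell (fun _ => x) base
             (fun t => match ell t with theta1 => escale v1 D1 | theta2 => Fin 0 end)).
  2:{ intros t _. unfold base. destruct (ell t); simpl weight; simpl Crho.
      - rewrite (LS_add F g1 x y 1) by (auto using gnn_g1). rewrite escale_eadd. apply eadd_comm.
      - rewrite eadd_0_r; auto. }
  rewrite (Jsum_decomp F v1 v2 ell (fun _ => y) base
             (fun t => match ell t with theta1 => Fin 0 | theta2 => escale v2 D2 end)).
  2:{ intros t _. unfold base. destruct (ell t); simpl weight; simpl Crho.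
      - rewrite eadd_0_r; auto.
      - rewrite (LS_add F g2 (-1) x y) by (auto using gnn_g2; lra). rewrite escale_eadd. auto. }
  apply eadd_mono; [apply ele_refl|]. rewrite esum_ind1, esum_ind2.
  destruct (count_lab theta1 ell s c) as [|m] eqn:Em.
  - simpl. apply emult_nonneg. apply escale_nonneg; [lra|]. apply LS_nonneg; auto using gnn_g2.
  - destruct (count_lab theta2 ell s c) as [|n] eqn:En.
    + assert (r = 1). { pose proof (pos_INR_S m). change (INR 0) with 0 in Hcond.
        assert (0 < v1 * INR (S m)) by (apply Rmult_lt_0_compat; auto). nra. }
      assert (x = y) by lra. subst D1. rewrite H0, LS_empty by apply gnn_g1.
      rewrite escale_0, emult_zero. simpl. lra.
    + rewrite !emult_S, !escale_escale. apply LS_compare; auto using gnn_g1.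
      * apply Rmult_lt_0_compat; auto using pos_INR_S.
      * apply Rmult_lt_0_compat; auto using pos_INR_S.
      * intros eta He. unfold g1, g2.
        destruct (Rlt_dec 0 eta); [|lra].
        destruct (Rlt_dec eta 1); [|simpl; auto].
        unfold escale, ele.
        apply div_le_helper; try lra.
        pose proof (pos_INR_S m). pose proof (pos_INR_S n).
        assert (Pm : 0 <= INR (S m) * v1) by nra. assert (Pn : 0 <= INR (S n) * v2) by nra.
        assert (INR (S m) * v1 * (1 - eta) <= INR (S m) * v1 * (1 - r)) by (apply Rmult_le_compat_l; lra).
        assert (INR (S n) * v2 * r <= INR (S n) * v2 * eta) by (apply Rmult_le_compat_l; lra).
        nra.
Qed.

Lemma down_mono F v1 v2 ell r s c x y : 0 < v1 -> 0 < v2 -> r <= 1 -> 0 <= y -> y <= x -> x <= r ->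
  v2 * INR (count_lab theta2 ell s c) * r <= v1 * INR (count_lab theta1 ell s c) * (1 - r) ->
  ele (Jsum F v1 v2 ell (fun _ => x) s c) (Jsum F v1 v2 ell (fun _ => y) s c).
Proof.
  intros Hv1 Hv2 Hr Hy Hyx Hxr Hcond.
  set (D1 := LSint F g1 y x). set (D2 := LSint F g2 y x).
  set (base := fun t => match ell t with theta1 => escale v1 (LSint F g1 x 1)
                                  | theta2 => escale v2 (LSint F g2 (-1) y) end).
  rewrite (Jsum_decomp F v1 v2 ell (fun _ => x) base
             (fun t => match ell t with theta1 => Fin 0 | theta2 => escale v2 D2 end)).
  2:{ intros t _. unfold base. destruct (ell t); simpl weight; simpl Crho.
      - rewrite eadd_0_r; auto.
      - rewrite (LS_add F g2 (-1) y x) by (auto using gnn_g2; lra). rewrite escale_eadd. auto. }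
  rewrite (Jsum_decomp F v1 v2 ell (fun _ => y) base
             (fun t => match ell t with theta1 => escale v1 D1 | theta2 => Fin 0 end)).
  2:{ intros t _. unfold base. destruct (ell t); simpl weight; simpl Crho.
      - rewrite (LS_add F g1 y x 1) by (auto using gnn_g1; lra). rewrite escale_eadd. apply eadd_comm.
      - rewrite eadd_0_r; auto. }
  apply eadd_mono; [apply ele_refl|]. rewrite esum_ind1, esum_ind2.
  destruct (count_lab theta2 ell s c) as [|n] eqn:En.
  - simpl. apply emult_nonneg. apply escale_nonneg; [lra|]. apply LS_nonneg; auto using gnn_g1.
  - destruct (count_lab theta1 ell s c) as [|m] eqn:Em.
    + assert (r = 0). { pose proof (pos_INR_S n). change (INR 0) with 0 in Hcond.
        assert (0 < v2 * INR (S n)) by (apply Rmult_lt_0_compat; auto). nra. }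
      assert (x = y) by lra. subst D2. rewrite H0, LS_empty by apply gnn_g2.
      rewrite escale_0, emult_zero. simpl. lra.
    + assert (r < 1).
      { destruct (Rlt_dec r 1); auto. assert (r = 1) by lra. subst r.
        pose proof (pos_INR_S n). nra. }
      rewrite !emult_S, !escale_escale. apply LS_compare; auto using gnn_g2; try lra.
      * apply Rmult_lt_0_compat; auto using pos_INR_S.
      * apply Rmult_lt_0_compat; auto using pos_INR_S.
      * intros eta He. unfold g1, g2.
        destruct (Rlt_dec 0 eta); [|lra].
        destruct (Rlt_dec eta 1); [|lra]. unfold escale, ele.
        apply div_le_helper; try lra.
        pose proof (pos_INR_S m). pose proof (pos_INR_S n).
        assert (Pm : 0 <= INR (S m) * v1) by nra. assert (Pn : 0 <= INR (S n) * v2) by nra.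
        assert (INR (S n) * v2 * eta <= INR (S n) * v2 * r) by (apply Rmult_le_compat_l; lra).
        assert (INR (S m) * v1 * (1 - r) <= INR (S m) * v1 * (1 - eta)) by (apply Rmult_le_compat_l; lra).
        nra.
Qed.

Lemma mono_chain (p : nat -> R) s e :
  (forall t, (s <= t)%nat -> (S t < e)%nat -> p t <= p (S t)) ->
  forall t t', (s <= t)%nat -> (t <= t')%nat -> (t' < e)%nat -> p t <= p t'.
Proof.
  intros H t t'. induction t'; intros H1 H2 H3.
  - assert (t = 0%nat) by lia. subst; lra.
  - destruct (Nat.eq_dec t (S t')). subst; lra.
    apply Rle_trans with (p t'). apply IHt'; lia. apply H; lia.
Qed.

Lemma up_claim F v1 v2 ell r p e : 0 < v1 -> 0 < v2 -> 0 <= r ->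
  forall c s x, (s + c = e)%nat ->
  (forall s' c', (s <= s')%nat -> (s' + c' = e)%nat ->
     v1 * INR (count_lab theta1 ell s' c') * (1 - r) <= v2 * INR (count_lab theta2 ell s' c') * r) ->
  r <= x ->
  (forall t, (s <= t < e)%nat -> x <= p t /\ p t <= 1) ->
  (forall t, (s <= t)%nat -> (S t < e)%nat -> p t <= p (S t)) ->
  ele (Jsum F v1 v2 ell (fun _ => x) s c) (Jsum F v1 v2 ell p s c).
Proof.
  intros Hv1 Hv2 Hr c. induction c; intros s x Hse Hcond Hrx Hp Hm.
  - cbn [Jsum]. apply ele_refl.
  - destruct (Hp s) as [Hxs Hs1]; [lia|].
    eapply ele_trans.
    + apply (up_mono F v1 v2 ell r s (S c) x (p s)); auto; try lra; apply Hcond; lia.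
    + cbn [Jsum]. apply eadd_mono; [apply ele_refl|].
      apply IHc; auto; try lia; try lra.
      * intros; apply Hcond; lia.
      * intros t Ht. split; [|apply Hp; lia].
        apply (mono_chain p s e Hm); lia.
      * intros; apply Hm; lia.
Qed.

Lemma down_claim F v1 v2 ell r p i : 0 < v1 -> 0 < v2 -> r <= 1 ->
  forall c x,
  (forall c', (c' <= c)%nat ->
     v2 * INR (count_lab theta2 ell i c') * r <= v1 * INR (count_lab theta1 ell i c') * (1 - r)) ->
  x <= r ->
  (forall t, (i <= t < i + c)%nat -> 0 <= p t /\ p t <= x) ->
  (forall t, (i <= t)%nat -> (S t < i + c)%nat -> p t <= p (S t)) ->
  ele (Jsum F v1 v2 ell (fun _ => x) i c) (Jsum F v1 v2 ell p i c).
Proof.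
  intros Hv1 Hv2 Hr1 c. induction c; intros x Hcond Hxr Hp Hm.
  - cbn [Jsum]. apply ele_refl.
  - destruct (Hp (i + c)%nat) as [Hy0 Hyx]; [lia|].
    eapply ele_trans.
    + apply (down_mono F v1 v2 ell r i (S c) x (p (i + c)%nat)); auto; lra.
    + rewrite !Jsum_last. apply eadd_mono; [|apply ele_refl].
      apply IHc; auto; try lra.
      * intros t Ht. split; [apply Hp; lia|].
        apply (mono_chain p i (i + S c) Hm); lia.
      * intros; apply Hm; lia.
Qed.

Lemma split_exists (p : nat -> R) r i : forall c,
  (forall t, (i <= t)%nat -> (S t < i + c)%nat -> p t <= p (S t)) ->
  exists a, (a <= c)%nat /\ (forall t, (i <= t < i + a)%nat -> p t < r) /\
            (forall t, (i + a <= t < i + c)%nat -> r <= p t).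
Proof.
  induction c; intros Hm.
  - exists 0%nat. split; [lia|]. split; intros; lia.
  - destruct IHc as [a [Ha [H1 H2]]]. { intros; apply Hm; lia. }
    destruct (Nat.eq_dec a c).
    + subst a. destruct (Rlt_dec (p (i + c)%nat) r).
      * exists (S c). split; [lia|]. split.
        -- intros t Ht. destruct (Nat.eq_dec t (i + c)). subst; auto. apply H1; lia.
        -- intros; lia.
      * exists c. split; [lia|]. split; auto.
        intros t Ht. destruct (Nat.eq_dec t (i + c)). subst; lra. apply H2; lia.
    + exists a. split; [lia|]. split; auto.
      intros t Ht. destruct (Nat.eq_dec t (i + c)).
      * subst t. apply Rle_trans with (p (i + c - 1)%nat). apply H2; lia.
        replace (i + c)%nat with (S (i + c - 1)) at 2 by lia. apply Hm; lia.
      * apply H2; lia.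
Qed.

Lemma main_general F v1 v2 ell p r i cnt : 0 < v1 -> 0 < v2 -> 0 <= r -> r <= 1 ->
  (forall a, (a <= cnt)%nat ->
     v1 * INR (count_lab theta1 ell (i + a) (cnt - a)) * (1 - r)
       <= v2 * INR (count_lab theta2 ell (i + a) (cnt - a)) * r) ->
  (forall a, (a <= cnt)%nat ->
     v2 * INR (count_lab theta2 ell i a) * r <= v1 * INR (count_lab theta1 ell i a) * (1 - r)) ->
  (forall t, (i <= t < i + cnt)%nat -> 0 <= p t <= 1) ->
  (forall t, (i <= t)%nat -> (S t < i + cnt)%nat -> p t <= p (S t)) ->
  ele (Jsum F v1 v2 ell (fun _ => r) i cnt) (Jsum F v1 v2 ell p i cnt).
Proof.
  intros Hv1 Hv2 Hr0 Hr1 Hsuf Hpre Hp Hm.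
  destruct (split_exists p r i cnt Hm) as [a [Ha [H1 H2]]].
  replace cnt with (a + (cnt - a))%nat by lia. rewrite !Jsum_split.
  apply eadd_mono.
  - apply (down_claim F v1 v2 ell r p i); auto; try lra.
    + intros c' Hc'. apply Hpre; lia.
    + intros t Ht. split; [apply Hp; lia|]. left; apply H1; lia.
    + intros; apply Hm; lia.
  - apply (up_claim F v1 v2 ell r p (i + cnt)); auto; try lra; try lia.
    + intros s' c' H3 H4. replace s' with (i + (s' - i))%nat by lia.
      replace c' with (cnt - (s' - i))%nat by lia. apply Hsuf; lia.
    + intros t Ht. split; [apply H2; lia|apply Hp; lia].
    + intros; apply Hm; lia.
Qed.

Definition Fd (eta : R) (x : R) : R := if Rlt_dec x eta then 0 else 1.

Lemma Fd_lt eta x : x < eta -> Fd eta x = 0.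
Proof. unfold Fd; destruct (Rlt_dec x eta); auto; lra. Qed.
Lemma Fd_ge eta x : eta <= x -> Fd eta x = 1.
Proof. unfold Fd; destruct (Rlt_dec x eta); auto; lra. Qed.

Lemma Fd_cdf eta : 0 < eta -> eta < 1 -> is_cdf01 (Fd eta).
Proof.
  intros H0 H1. split; [|split; [|split]].
  - intros x y Hxy. unfold Fd. destruct (Rlt_dec x eta), (Rlt_dec y eta); lra.
  - intros x Hx. apply Fd_lt; lra.
  - intros x Hx. apply Fd_ge; lra.
  - intros x eps He. destruct (Rlt_dec x eta).
    + exists (eta - x). split; [lra|]. intros y Hy. rewrite !Fd_lt by lra. lra.
    + exists 1. split; [lra|]. intros y Hy. rewrite !Fd_ge by lra. lra.
Qed.

Lemma dirac_ub eta g G a b : gnn g -> g eta = Fin G -> 0 <= G -> a <= b ->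
  ele (LSint (Fd eta) g a b) (Fin (G * (Fd eta b - Fd eta a))).
Proof.
  intros Hg HG HG0 Hab. apply LS_le; auto. intros s Hs.
  induction Hs as [|b0 b' s c0 H IH Hbb Hc0 Hgp].
  - lra.
  - pose proof (lsI_le _ _ _ _ _ H) as Hab0.
    specialize (IH ltac:(lra)).
    assert (c0 * (Fd eta b' - Fd eta b0) <= G * (Fd eta b' - Fd eta b0)).
    { unfold Fd. destruct (Rlt_dec b' eta), (Rlt_dec b0 eta); try lra.
      specialize (Hgp eta ltac:(lra)). rewrite HG in Hgp. simpl in Hgp. lra. }
    lra.
Qed.

Lemma dirac_lb eta eta' a b c0 g : gnn g -> a <= eta' -> eta' < eta -> eta <= b -> 0 <= c0 ->
  (forall x, eta' < x <= eta -> ele (Fin c0) (g x)) ->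
  ele (Fin c0) (LSint (Fd eta) g a b).
Proof.
  intros Hg H1 H2 H3 Hc0 Hc.
  assert (L : lsI (Fd eta) g a b (((0 + 0 * (Fd eta eta' - Fd eta a)) + c0 * (Fd eta eta - Fd eta eta'))
                                   + 0 * (Fd eta b - Fd eta eta))).
  { assert (L1 : lsI (Fd eta) g a eta' (0 + 0 * (Fd eta eta' - Fd eta a))).
    { apply lsI1; [apply lsI0|lra|lra|intros; apply Hg]. }
    assert (L2 : lsI (Fd eta) g a eta ((0 + 0 * (Fd eta eta' - Fd eta a)) + c0 * (Fd eta eta - Fd eta eta'))).
    { apply lsI1; auto; lra. }
    apply lsI1; [exact L2|lra|lra|intros; apply Hg]. }
  apply LS_ge in L. rewrite (Fd_ge eta eta), (Fd_lt eta eta') in L by lra.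
  replace (0 + 0 * (0 - Fd eta a) + c0 * (1 - 0) + 0 * (Fd eta b - 1)) with c0 in L by ring.
  exact L.
Qed.

Fixpoint sumR (f : nat -> R) (i c : nat) : R :=
  match c with O => 0 | S c' => f i + sumR f (S i) c' end.

Lemma sumR_split f i a b : sumR f i (a + b) = sumR f i a + sumR f (i + a) b.
Proof.
  revert i; induction a; intros i; cbn [sumR Nat.add].
  - rewrite Nat.add_0_r; ring.
  - rewrite IHa. replace (S i + a)%nat with (i + S a)%nat by lia. ring.
Qed.

Lemma sumR_ext f f' i c : (forall t, (i <= t < i + c)%nat -> f t = f' t) -> sumR f i c = sumR f' i c.
Proof.
  revert i; induction c; intros i H; cbn [sumR]; auto.
  rewrite H by lia. rewrite IHc; auto. intros; apply H; lia.
Qed.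

Lemma sumR_count k l ell i c :
  sumR (fun t => k * INR (is_lab l (ell t))) i c = k * INR (count_lab l ell i c).
Proof.
  revert i; induction c; intros i; cbn [sumR count_lab].
  - simpl; ring.
  - rewrite IHc, plus_INR. ring.
Qed.

Lemma count_split l ell i a b :
  count_lab l ell i (a + b) = (count_lab l ell i a + count_lab l ell (i + a) b)%nat.
Proof.
  revert i; induction a; intros i; cbn [count_lab Nat.add].
  - rewrite Nat.add_0_r; auto.
  - rewrite IHa. replace (S i + a)%nat with (i + S a)%nat by lia. lia.
Qed.

Lemma count_tot ell i c : (count_lab theta1 ell i c + count_lab theta2 ell i c)%nat = c.
Proof.
  revert i; induction c; intros i; cbn [count_lab]; auto.
  specialize (IHc (S i)). destruct (ell i); simpl; lia.
Qed.

Lemma Jsum_lb F v1 v2 ell p f i c :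
  (forall t, (i <= t < i + c)%nat -> ele (Fin (f t)) (escale (weight v1 v2 (ell t)) (Crho F (ell t) (p t)))) ->
  ele (Fin (sumR f i c)) (Jsum F v1 v2 ell p i c).
Proof.
  revert i; induction c; intros i H; cbn [sumR Jsum].
  - apply ele_refl.
  - change (Fin (f i + sumR f (S i) c)) with (eadd (Fin (f i)) (Fin (sumR f (S i) c))).
    apply eadd_mono. apply H; lia. apply IHc. intros; apply H; lia.
Qed.

Lemma Jsum_ub F v1 v2 ell p f i c :
  (forall t, (i <= t < i + c)%nat -> ele (escale (weight v1 v2 (ell t)) (Crho F (ell t) (p t))) (Fin (f t))) ->
  ele (Jsum F v1 v2 ell p i c) (Fin (sumR f i c)).
Proof.
  revert i; induction c; intros i H; cbn [sumR Jsum].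
  - apply ele_refl.
  - change (Fin (f i + sumR f (S i) c)) with (eadd (Fin (f i)) (Fin (sumR f (S i) c))).
    apply eadd_mono. apply H; lia. apply IHc. intros; apply H; lia.
Qed.

Lemma lim_helper A B x : 0 <= A -> 0 <= B -> x < 1 ->
  (forall eta, x < eta < 1 -> A * (1 - eta) <= B * eta) -> A * (1 - x) <= B * x.
Proof.
  intros HA HB Hx H. destruct (Rle_lt_dec (A * (1 - x)) (B * x)) as [|Hlt]; auto.
  exfalso. set (f0 := A * (1 - x) - B * x).
  assert (Hf0 : 0 < f0) by (unfold f0; lra).
  assert (HAB : 0 < A + B). { destruct (Rle_lt_dec (A + B) 0); [|lra]. assert (A = 0) by lra. assert (B = 0) by lra. subst. unfold f0 in Hf0. lra. }
  set (d := Rmin ((1 - x) / 2) (f0 / (2 * (A + B)))).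
  assert (Hd0 : 0 < d). { unfold d. apply Rmin_glb_lt. lra. unfold Rdiv. apply Rmult_lt_0_compat; auto. apply Rinv_0_lt_compat; lra. }
  assert (Hd1 : d <= (1 - x) / 2) by apply Rmin_l.
  assert (Hd2 : d <= f0 / (2 * (A + B))) by apply Rmin_r.
  specialize (H (x + d) ltac:(lra)).
  assert ((A + B) * d <= (A + B) * (f0 / (2 * (A + B)))) by (apply Rmult_le_compat_l; lra).
  replace ((A + B) * (f0 / (2 * (A + B)))) with (f0 / 2) in H0 by (field; lra).
  unfold f0 in *. nra.
Qed.

Lemma div_le_rev x y a b : 0 < a -> 0 < b -> x * / a <= y * / b -> x * b <= y * a.
Proof.
  intros Ha Hb H.
  replace (x * b) with ((x * / a) * (a * b)) by (field; lra).
  replace (y * a) with ((y * / b) * (a * b)) by (field; lra).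
  apply Rmult_le_compat_r; auto. nra.
Qed.

Lemma INR_nonneg n : 0 <= INR n.
Proof. apply pos_INR. Qed.

Lemma block_suffix ell v1 v2 lo hi p : 0 < v1 -> 0 < v2 -> (lo <= hi)%nat ->
  optimal ell v1 v2 lo hi p -> constant_sol lo hi p ->
  forall a, (a <= S hi - lo)%nat ->
  v1 * INR (count_lab theta1 ell (lo + a) (S hi - lo - a)) * (1 - rval ell v1 v2 lo hi)
  <= v2 * INR (count_lab theta2 ell (lo + a) (S hi - lo - a)) * rval ell v1 v2 lo hi.
Proof.
  intros Hv1 Hv2 Hlh [Hfeas Hopt] Hconst a Ha.
  unfold rval, mcount, ncount.
  set (cnt := (S hi - lo)%nat) in *.
  assert (Ecnt : (lo + cnt = S hi)%nat) by (unfold cnt; lia).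
  set (M := INR (count_lab theta1 ell lo cnt)). set (N := INR (count_lab theta2 ell lo cnt)).
  set (mS := INR (count_lab theta1 ell (lo + a) (cnt - a))).
  set (nS := INR (count_lab theta2 ell (lo + a) (cnt - a))).
  set (mP := INR (count_lab theta1 ell lo a)). set (nP := INR (count_lab theta2 ell lo a)).
  assert (HM : M = mP + mS).
  { unfold M, mP, mS. rewrite <- plus_INR, <- count_split. f_equal. f_equal. lia. }
  assert (HN : N = nP + nS).
  { unfold N, nP, nS. rewrite <- plus_INR, <- count_split. f_equal. f_equal. lia. }
  assert (HMN : M + N = INR cnt) by (unfold M, N; rewrite <- plus_INR, count_tot; auto).
  assert (Hcnt1 : 1 <= INR cnt) by (apply (le_INR 1); unfold cnt; lia).
  assert (HmP := INR_nonneg (count_lab theta1 ell lo a)). fold mP in HmP.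
  assert (HnP := INR_nonneg (count_lab theta2 ell lo a)). fold nP in HnP.
  assert (HmS := INR_nonneg (count_lab theta1 ell (lo + a) (cnt - a))). fold mS in HmS.
  assert (HnS := INR_nonneg (count_lab theta2 ell (lo + a) (cnt - a))). fold nS in HnS.
  assert (HD : 0 < v1 * M + v2 * N).
  { destruct (Rle_lt_dec M 0). assert (1 <= N) by lra. nra. nra. }
  set (rho := v1 * M / (v1 * M + v2 * N)).
  assert (Hrho : rho * (v1 * M + v2 * N) = v1 * M) by (unfold rho; field; lra).
  assert (Hrho0 : 0 <= rho).
  { unfold rho, Rdiv. apply Rmult_le_pos; [nra|]. left; apply Rinv_0_lt_compat; auto. }
  assert (Hrho1 : rho <= 1).
  { apply Rmult_le_reg_r with (v1 * M + v2 * N); auto. rewrite Hrho. nra. }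
  set (c := p lo).
  assert (Hc : 0 <= c <= 1) by (apply (proj1 Hfeas); lia).
  assert (Hpc : forall t, (lo <= t < lo + cnt)%nat -> p t = c).
  { intros t Ht. apply Hconst. lia. }
  assert (Hcr : c <= rho).
  { destruct (Rle_lt_dec c rho) as [|Hlt]; auto. exfalso.
    set (e1 := rho + (c - rho) / 3). set (e2 := rho + 2 * (c - rho) / 3).
    assert (He1 : 0 < e1) by (unfold e1; lra). assert (He12 : e1 < e2) by (unfold e1, e2; lra).
    assert (He2 : e2 < c) by (unfold e2; lra).
    assert (Hf0 : feasible lo hi (fun _ => 0)) by (split; intros; lra).
    pose proof (Hopt (Fd e2) (Fd_cdf e2 ltac:(lra) ltac:(lra)) (fun _ => 0) Hf0) as HO.
    unfold J in HO. fold cnt in HO.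
    assert (Lo : ele (Fin (sumR (fun t => (v2 * / (1 - e1)) * INR (is_lab theta2 (ell t))) lo cnt))
                     (Jsum (Fd e2) v1 v2 ell p lo cnt)).
    { apply Jsum_lb. intros t Ht. rewrite (Hpc t Ht). destruct (ell t); cbn [weight Crho is_lab].
      - change (INR 0) with 0. rewrite Rmult_0_r. apply escale_nonneg; [lra|].
        apply LS_nonneg; [apply gnn_g1|lra].
      - change (INR 1) with 1. rewrite Rmult_1_r. apply escale_lb; [lra|].
        apply dirac_lb with e1; auto using gnn_g2; try lra.
        + left; apply Rinv_0_lt_compat; lra.
        + intros x Hx. unfold g2. destruct (Rlt_dec x 1); [|lra]. simpl.
          apply Rinv_le_contravar; lra. }
    assert (Up : ele (Jsum (Fd e2) v1 v2 ell (fun _ => 0) lo cnt)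
                     (Fin (sumR (fun t => (v1 * / e2) * INR (is_lab theta1 (ell t))) lo cnt))).
    { apply Jsum_ub. intros t Ht. destruct (ell t); cbn [weight Crho is_lab].
      - change (INR 1) with 1.
        replace (v1 * / e2 * 1) with (v1 * (/ e2 * (Fd e2 1 - Fd e2 0)))
          by (rewrite Fd_ge, Fd_lt by lra; ring).
        apply escale_ub; [lra|]. apply dirac_ub; auto using gnn_g1; try lra.
        + unfold g1. destruct (Rlt_dec 0 e2); [auto|lra].
        + left; apply Rinv_0_lt_compat; lra.
      - change (INR 0) with 0.
        replace (v1 * / e2 * 0) with (v2 * (/ (1 - e2) * (Fd e2 0 - Fd e2 (-1))))
          by (rewrite !Fd_lt by lra; ring).
        apply escale_ub; [lra|]. apply dirac_ub; auto using gnn_g2; try lra.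
        + unfold g2. destruct (Rlt_dec e2 1); [auto|lra].
        + left; apply Rinv_0_lt_compat; lra. }
    rewrite sumR_count in Lo, Up. fold N in Lo. fold M in Up.
    pose proof (ele_trans _ _ _ Lo (ele_trans _ _ _ HO Up)) as HH. simpl in HH.
    replace (v2 * / (1 - e1) * N) with ((v2 * N) * / (1 - e1)) in HH by ring.
    replace (v1 * / e2 * M) with ((v1 * M) * / e2) in HH by ring.
    apply div_le_rev in HH; try lra.
    assert (v1 * M < (v1 * M + v2 * N) * e1).
    { rewrite <- Hrho. apply Rmult_lt_compat_r with (r := v1 * M + v2 * N) in Hlt; auto.
      unfold e1 in *. nra. }
    assert (v2 * N * e1 <= v2 * N * e2) by (apply Rmult_le_compat_l; nra).
    nra. }
  assert (Hsuf : forall e, rho < e < 1 -> v1 * mS * (1 - e) <= v2 * nS * e).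
  { intros e He.
    set (e1 := (c + e) / 2).
    set (q := fun t => if Nat.ltb t (lo + a) then 0 else 1).
    assert (Hfq : feasible lo hi q).
    { split.
      - intros t Ht. unfold q. destruct (Nat.ltb t (lo + a)); lra.
      - intros t H1 H2. unfold q. destruct (Nat.ltb_spec t (lo + a)), (Nat.ltb_spec (S t) (lo + a)); lra || lia. }
    pose proof (Hopt (Fd e) (Fd_cdf e ltac:(lra) ltac:(lra)) q Hfq) as HO.
    unfold J in HO. fold cnt in HO.
    assert (Lo : ele (Fin (sumR (fun t => (v1 * / e) * INR (is_lab theta1 (ell t))) lo cnt))
                     (Jsum (Fd e) v1 v2 ell p lo cnt)).
    { apply Jsum_lb. intros t Ht. rewrite (Hpc t Ht). destruct (ell t); cbn [weight Crho is_lab].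
      - change (INR 1) with 1. rewrite Rmult_1_r. apply escale_lb; [lra|].
        apply dirac_lb with e1; auto using gnn_g1; try (unfold e1; lra).
        + left; apply Rinv_0_lt_compat; lra.
        + intros x Hx. unfold g1. destruct (Rlt_dec 0 x); [|unfold e1 in Hx; lra]. simpl.
          apply Rinv_le_contravar; unfold e1 in Hx; lra.
      - change (INR 0) with 0. rewrite Rmult_0_r. apply escale_nonneg; [lra|].
        apply LS_nonneg; [apply gnn_g2|lra]. }
    set (f2 := fun t => if Nat.ltb t (lo + a) then (v1 * / e) * INR (is_lab theta1 (ell t))
                        else (v2 * / (1 - e)) * INR (is_lab theta2 (ell t))).
    assert (Up : ele (Jsum (Fd e) v1 v2 ell q lo cnt) (Fin (sumR f2 lo cnt))).
    { apply Jsum_ub. intros t Ht. unfold q, f2. destruct (Nat.ltb t (lo + a));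
        destruct (ell t); cbn [weight Crho is_lab].
      - change (INR 1) with 1.
        replace (v1 * / e * 1) with (v1 * (/ e * (Fd e 1 - Fd e 0)))
          by (rewrite Fd_ge, Fd_lt by lra; ring).
        apply escale_ub; [lra|]. apply dirac_ub; auto using gnn_g1; try lra.
        + unfold g1. destruct (Rlt_dec 0 e); [auto|lra].
        + left; apply Rinv_0_lt_compat; lra.
      - change (INR 0) with 0.
        replace (v1 * / e * 0) with (v2 * (/ (1 - e) * (Fd e 0 - Fd e (-1))))
          by (rewrite !Fd_lt by lra; ring).
        apply escale_ub; [lra|]. apply dirac_ub; auto using gnn_g2; try lra.
        + unfold g2. destruct (Rlt_dec e 1); [auto|lra].
        + left; apply Rinv_0_lt_compat; lra.
      - change (INR 0) with 0.
        replace (v2 * / (1 - e) * 0) with (v1 * (/ e * (Fd e 1 - Fd e 1))) by ring.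
        apply escale_ub; [lra|]. apply dirac_ub; auto using gnn_g1; try lra.
        + unfold g1. destruct (Rlt_dec 0 e); [auto|lra].
        + left; apply Rinv_0_lt_compat; lra.
      - change (INR 1) with 1.
        replace (v2 * / (1 - e) * 1) with (v2 * (/ (1 - e) * (Fd e 1 - Fd e (-1))))
          by (rewrite Fd_ge, Fd_lt by lra; ring).
        apply escale_ub; [lra|]. apply dirac_ub; auto using gnn_g2; try lra.
        + unfold g2. destruct (Rlt_dec e 1); [auto|lra].
        + left; apply Rinv_0_lt_compat; lra. }
    assert (Es : sumR f2 lo cnt = v1 * / e * mP + v2 * / (1 - e) * nS).
    { replace (sumR f2 lo cnt) with (sumR f2 lo (a + (cnt - a))) by (f_equal; lia).
      rewrite sumR_split.
      rewrite (sumR_ext f2 (fun t => (v1 * / e) * INR (is_lab theta1 (ell t))) lo a).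
      2:{ intros t Ht. unfold f2. destruct (Nat.ltb_spec t (lo + a)); [auto|lia]. }
      rewrite (sumR_ext f2 (fun t => (v2 * / (1 - e)) * INR (is_lab theta2 (ell t))) (lo + a) (cnt - a)).
      2:{ intros t Ht. unfold f2. destruct (Nat.ltb_spec t (lo + a)); [lia|auto]. }
      rewrite !sumR_count. auto. }
    rewrite sumR_count in Lo. fold M in Lo. rewrite Es in Up.
    pose proof (ele_trans _ _ _ Lo (ele_trans _ _ _ HO Up)) as HH. simpl in HH.
    rewrite HM in HH.
    assert (HH2 : (v1 * mS) * / e <= (v2 * nS) * / (1 - e)) by nra.
    apply div_le_rev in HH2; lra. }
  destruct (Rle_lt_dec 1 rho).
  - assert (rho = 1) by lra. fold rho. rewrite H. nra.
  - fold rho. apply lim_helper; auto; nra.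
Qed.

Lemma mediant XA DA XB DB : 0 < DA -> 0 < DB -> XB / DB <= XA / DA ->
  (XA + XB) / (DA + DB) <= XA / DA /\ XB / DB <= (XA + XB) / (DA + DB).
Proof.
  intros HA HB H. unfold Rdiv in *. apply div_le_rev in H; auto.
  split; apply div_le_helper; lra.
Qed.

Lemma Dpos v1 v2 ell lo c : 0 < v1 -> 0 < v2 -> (1 <= c)%nat ->
  0 < v1 * INR (count_lab theta1 ell lo c) + v2 * INR (count_lab theta2 ell lo c).
Proof.
  intros H1 H2 Hc.
  assert (E : INR (count_lab theta1 ell lo c) + INR (count_lab theta2 ell lo c) = INR c)
    by (rewrite <- plus_INR, count_tot; auto).
  assert (1 <= INR c) by (apply (le_INR 1); lia).
  pose proof (INR_nonneg (count_lab theta1 ell lo c)). pose proof (INR_nonneg (count_lab theta2 ell lo c)).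
  destruct (Rle_lt_dec (INR (count_lab theta1 ell lo c)) 0); nra.
Qed.

Theorem theorem4p10 (T : nat) (ell : nat -> label) (v1 v2 : R) (i k j : nat) :
  0 < v1 -> 0 < v2 ->
  (1 <= i)%nat -> (i <= k)%nat -> (k < j)%nat -> (j <= T)%nat ->
  (exists p, optimal ell v1 v2 i k p /\ constant_sol i k p) ->
  (exists p, optimal ell v1 v2 (S k) j p /\ constant_sol (S k) j p) ->
  rval ell v1 v2 i k >= rval ell v1 v2 (S k) j ->
  exists p, optimal ell v1 v2 i j p /\ constant_sol i j p /\ p i = rval ell v1 v2 i j.
Proof.
  intros Hv1 Hv2 Hi Hik Hkj HjT [pA [HA HAc]] [pB [HB HBc]] Hr.
  pose proof (block_suffix ell v1 v2 i k pA Hv1 Hv2 Hik HA HAc) as sufA.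
  pose proof (block_suffix ell v1 v2 (S k) j pB Hv1 Hv2 ltac:(lia) HB HBc) as sufB.
  set (rA := rval ell v1 v2 i k) in *. set (rB := rval ell v1 v2 (S k) j) in *.
  set (r := rval ell v1 v2 i j).
  set (cntA := (S k - i)%nat) in *. set (cntB := (S j - S k)%nat) in *.
  set (cnt := (S j - i)%nat).
  assert (Ec : cnt = (cntA + cntB)%nat) by (unfold cnt, cntA, cntB; lia).
  assert (EA : (i + cntA = S k)%nat) by (unfold cntA; lia).
  set (MA := INR (count_lab theta1 ell i cntA)). set (NA := INR (count_lab theta2 ell i cntA)).
  set (MB := INR (count_lab theta1 ell (S k) cntB)). set (NB := INR (count_lab theta2 ell (S k) cntB)).
  assert (HDA : 0 < v1 * MA + v2 * NA) by (apply Dpos; auto; unfold cntA; lia).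
  assert (HDB : 0 < v1 * MB + v2 * NB) by (apply Dpos; auto; unfold cntB; lia).
  assert (HMA := INR_nonneg (count_lab theta1 ell i cntA)). fold MA in HMA.
  assert (HNA := INR_nonneg (count_lab theta2 ell i cntA)). fold NA in HNA.
  assert (HMB := INR_nonneg (count_lab theta1 ell (S k) cntB)). fold MB in HMB.
  assert (HNB := INR_nonneg (count_lab theta2 ell (S k) cntB)). fold NB in HNB.
  assert (ErA : rA = v1 * MA / (v1 * MA + v2 * NA)) by reflexivity.
  assert (ErB : rB = v1 * MB / (v1 * MB + v2 * NB)) by reflexivity.
  assert (EM : INR (count_lab theta1 ell i cnt) = MA + MB).
  { rewrite Ec, count_split, plus_INR, EA. auto. }
  assert (EN : INR (count_lab theta2 ell i cnt) = NA + NB).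
  { rewrite Ec, count_split, plus_INR, EA. auto. }
  assert (Er : r = (v1 * MA + v1 * MB) / ((v1 * MA + v2 * NA) + (v1 * MB + v2 * NB))).
  { unfold r, rval, mcount, ncount. fold cnt. rewrite EM, EN. f_equal; ring. }
  destruct (mediant (v1 * MA) (v1 * MA + v2 * NA) (v1 * MB) (v1 * MB + v2 * NB) HDA HDB)
    as [HrA HrB].
  { rewrite <- ErA, <- ErB. lra. }
  rewrite <- Er, <- ErA in HrA. rewrite <- Er, <- ErB in HrB.
  set (D := (v1 * MA + v2 * NA) + (v1 * MB + v2 * NB)).
  assert (HD : 0 < D) by (unfold D; lra).
  assert (Ir : v1 * (MA + MB) * (1 - r) = v2 * (NA + NB) * r).
  { rewrite Er. unfold D. field. unfold D in HD. lra. }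
  assert (IA : v1 * MA * (1 - rA) = v2 * NA * rA).
  { rewrite ErA. field. lra. }
  assert (Hr0 : 0 <= r).
  { rewrite Er. unfold Rdiv. apply Rmult_le_pos; [nra|]. left; apply Rinv_0_lt_compat; auto. }
  assert (Hr1 : r <= 1).
  { rewrite Er. fold D. apply Rmult_le_reg_r with D; auto. unfold Rdiv.
    rewrite Rmult_assoc, Rinv_l by lra. unfold D. nra. }
  assert (Csuf : forall a, (a <= cnt)%nat ->
     v1 * INR (count_lab theta1 ell (i + a) (cnt - a)) * (1 - r)
       <= v2 * INR (count_lab theta2 ell (i + a) (cnt - a)) * r).
  { intros a Ha. destruct (Compare_dec.le_lt_dec cntA a) as [Hle|Hlt].
    - specialize (sufB (a - cntA)%nat ltac:(fold cntB; lia)).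
      replace (S k + (a - cntA))%nat with (i + a)%nat in sufB by lia.
      fold cntB in sufB. replace (cntB - (a - cntA))%nat with (cnt - a)%nat in sufB by lia.
      pose proof (INR_nonneg (count_lab theta1 ell (i + a) (cnt - a))).
      pose proof (INR_nonneg (count_lab theta2 ell (i + a) (cnt - a))).
      set (m := INR (count_lab theta1 ell (i + a) (cnt - a))) in *.
      set (n := INR (count_lab theta2 ell (i + a) (cnt - a))) in *.
      assert (v1 * m * (1 - r) <= v1 * m * (1 - rB)) by (apply Rmult_le_compat_l; nra).
      assert (v2 * n * rB <= v2 * n * r) by (apply Rmult_le_compat_l; nra).
      lra.
    - specialize (sufA a ltac:(fold cntA; lia)). fold cntA in sufA.
      assert (E1 : INR (count_lab theta1 ell (i + a) (cnt - a))
                   = INR (count_lab theta1 ell (i + a) (cntA - a)) + MB).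
      { replace (cnt - a)%nat with ((cntA - a) + cntB)%nat by lia.
        rewrite count_split, plus_INR. replace (i + a + (cntA - a))%nat with (S k) by lia. auto. }
      assert (E2 : INR (count_lab theta2 ell (i + a) (cnt - a))
                   = INR (count_lab theta2 ell (i + a) (cntA - a)) + NB).
      { replace (cnt - a)%nat with ((cntA - a) + cntB)%nat by lia.
        rewrite count_split, plus_INR. replace (i + a + (cntA - a))%nat with (S k) by lia. auto. }
      assert (E3 : MA = INR (count_lab theta1 ell i a) + INR (count_lab theta1 ell (i + a) (cntA - a))).
      { unfold MA. rewrite <- plus_INR, <- count_split. f_equal. f_equal. lia. }
      assert (E4 : NA = INR (count_lab theta2 ell i a) + INR (count_lab theta2 ell (i + a) (cntA - a))).
      { unfold NA. rewrite <- plus_INR, <- count_split. f_equal. f_equal. lia. }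
      rewrite E1, E2.
      pose proof (INR_nonneg (count_lab theta1 ell i a)).
      pose proof (INR_nonneg (count_lab theta2 ell i a)).
      set (mP := INR (count_lab theta1 ell i a)) in *.
      set (nP := INR (count_lab theta2 ell i a)) in *.
      set (mS := INR (count_lab theta1 ell (i + a) (cntA - a))) in *.
      set (nS := INR (count_lab theta2 ell (i + a) (cntA - a))) in *.
      assert (P0 : v2 * nP * rA <= v1 * mP * (1 - rA)) by (rewrite E3, E4 in IA; nra).
      assert (v1 * mP * (1 - rA) <= v1 * mP * (1 - r)) by (apply Rmult_le_compat_l; nra).
      assert (v2 * nP * r <= v2 * nP * rA) by (apply Rmult_le_compat_l; nra).
      rewrite E3, E4 in Ir. nra. }
  assert (Cpre : forall a, (a <= cnt)%nat ->
     v2 * INR (count_lab theta2 ell i a) * r <= v1 * INR (count_lab theta1 ell i a) * (1 - r)).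
  { intros a Ha. specialize (Csuf a Ha).
    assert (E1 : MA + MB = INR (count_lab theta1 ell i a) + INR (count_lab theta1 ell (i + a) (cnt - a))).
    { rewrite <- EM, <- plus_INR, <- count_split. f_equal. f_equal. lia. }
    assert (E2 : NA + NB = INR (count_lab theta2 ell i a) + INR (count_lab theta2 ell (i + a) (cnt - a))).
    { rewrite <- EN, <- plus_INR, <- count_split. f_equal. f_equal. lia. }
    rewrite E1, E2 in Ir. nra. }
  exists (fun _ => r). split; [|split; auto].
  - split.
    + split; intros; lra.
    + intros F _ p' [Hp1 Hp2]. unfold J. fold cnt.
      apply main_general; auto.
      * intros t Ht. apply Hp1. unfold cnt in Ht. lia.
      * intros t H1 H2. apply Hp2; unfold cnt in H2; lia.
  - intros t _. auto.
Qed.
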